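(* Let $G$ be a fullerene graph and $S$ a perfect star packing of $G$. If a pentagonal face $P$ of $G$ has a vertex $x\in C(S)$, then $G-C(S)$ contains a cycle $C$ which is not the boundary of a face of $G$ such that the path $P-x$ is a subgraph of $C$.
   Context: A fullerene graph is a finite simple connected (equivalently, $3$-connected) plane cubic graph all of whose faces are pentagons or hexagons. A perfect star packing of $G$ is a spanning subgraph $S$ of $G$ every connected component of which is isomorphic to $K_{1,3}$; $C(S)$ denotes the set of centers (degree-$3$ vertices) of the stars in $S$. A cycle of $G$ is facial if it bounds a face of $G$, and non-facial otherwise. *)

(* Defs.v *)
From mathcomp Require Import all_boot.
Set Implicit Arguments. Unset Strict Implicit. Unset Printing Implicit Defensive.

(* A plane graph is encoded combinatorially by a rotation system:
   V : vertices, adj : adjacency, rho v : the cyclic successor of a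
   neighbour of v in the (clockwise) rotation around v.  Darts are the
   ordered pairs (u,v) with adj u v; the face successor of the dart (u,v)
   is (v, rho v u); faces are the orbits of the face successor on darts.
   The embedding is on the sphere (plane) iff Euler's formula V-E+F = 2
   holds (for a connected graph). *)

Section Fullerene.
Variables (V : finType) (adj : rel V) (rho : V -> V -> V).

Definition nbhd (v : V) : {set V} := [set u | adj v u].

Definition darts : {set V * V} := [set d | adj d.1 d.2].

Definition face_succ (d : V * V) : V * V := (d.2, rho d.2 d.1).

Definition face_of (d : V * V) : {set V * V} :=
  [set d' | fconnect face_succ d d'].

Definition faces : {set {set V * V}} := [set face_of d | d in darts].

Definition face_vertices (F : {set V * V}) : {set V} := [set d.1 | d in F].

Definition face_edges (F : {set V * V}) : {set {set V}} :=
  [set [set d.1; d.2] | d in F].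

Definition simple_graph := symmetric adj /\ irreflexive adj.
Definition cubic := forall v, #|nbhd v| = 3.
Definition connected_graph := forall u v, connect adj u v.

Definition rotation_system :=
  forall v, (forall u, adj v u -> adj v (rho v u)) /\
            (forall u w, adj v u -> adj v w -> fconnect (rho v) u w).

(* Euler's formula V - E + F = 2, with E = #darts / 2, doubled *)
Definition euler_sphere :=
  (#|V| + #|faces|).*2 = #|darts| + 4.

Definition plane_cubic_graph :=
  [/\ simple_graph, connected_graph, cubic, rotation_system & euler_sphere].

Definition fullerene :=
  plane_cubic_graph /\
  forall F, F \in faces ->
    ((#|F| == 5) || (#|F| == 6)) /\ #|face_vertices F| = #|F|.

(* Perfect star packing: a spanning subgraph (given by its symmetric edge
   relation s contained in adj) every component of which is K_{1,3}. *)
Definition perfect_star_packing (s : rel V) :=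
  [/\ symmetric s, subrel s adj &
   forall v, let K := [set w | connect s v w] in
     #|K| = 4 /\
     exists2 c, c \in K &
       (forall w, w \in K -> w != c -> s c w) /\
       (forall w w', w \in K -> w' \in K -> w != c -> w' != c -> ~~ s w w')].

Definition centers (s : rel V) : {set V} := [set v | #|[set w | s v w]| == 3].

Definition is_cycle (p : seq V) := [/\ uniq p, 3 <= size p & cycle adj p].

Definition cycle_edges (p : seq V) : {set {set V}} :=
  [set [set x; next p x] | x in p].

Definition facial_cycle (p : seq V) :=
  exists2 F, F \in faces & cycle_edges p = face_edges F.

End Fullerene.

(* Main.v *)
Require Import Defs.
From mathcomp Require Import all_boot.
Set Implicit Arguments. Unset Strict Implicit. Unset Printing Implicit Defensive.

Section Star.
Variables (V : finType) (adj : rel V) (s : rel V).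
Hypothesis adj_sym : symmetric adj.
Hypothesis adj_irr : irreflexive adj.
Hypothesis nb3 : forall v, #|nbhd adj v| = 3.
Hypothesis Hs : perfect_star_packing adj s.

Local Notation C := (centers s).
Lemma in_nbhd v w : (w \in nbhd adj v) = adj v w.
Proof. by rewrite inE. Qed.

Lemma s_sym : symmetric s. Proof. by case: Hs. Qed.
Lemma s_adj : subrel s adj. Proof. by case: Hs. Qed.

Lemma center_s c w : c \in C -> adj c w -> s c w.
Proof.
rewrite inE => /eqP H3 acw.
have sub : [set w | s c w] \subset nbhd adj c.
  by apply/subsetP => y; rewrite !inE; apply: s_adj.
have := (subset_cardP _ sub); rewrite H3 nb3 => /(_ erefl) E.
by have := E w; rewrite !inE acw.
Qed.

Lemma comp_center v : exists c,
  [/\ c \in C, connect s v c &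
      forall w, connect s v w -> w \in C -> w = c].
Proof.
case: Hs => _ _ /(_ v) [K4 [c cK [Hc Hnc]]].
set K := [set w | connect s v w] in K4 cK Hc Hnc.
have sK : forall w w', w \in K -> s w w' -> w' \in K.
  move=> w w'; rewrite !inE => vw ww'.
  by apply: connect_trans vw (connect1 ww').
have cC : c \in C.
  rewrite inE; apply/eqP.
  have -> : [set w | s c w] = K :\ c.
    apply/setP => w; rewrite !inE.
    apply/idP/idP => [cw|/andP [wc wK]].
      have := sK c w cK cw; rewrite inE => ->; rewrite andbT.
      by apply: contraTneq cw => ->; apply/negP => /s_adj; rewrite adj_irr.
    by apply: Hc; rewrite ?inE.
  by move: K4; rewrite (cardsD1 c) cK => -[].
exists c; split => //; first by move: cK; rewrite inE.
move=> w vw wC; apply/eqP; apply/negPn/negP => wc.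
have wK : w \in K by rewrite inE.
have : #|[set y | s w y]| <= 1.
  apply/card_le1_eqP => y1 y2; rewrite !inE => s1 s2.
  have y1c : y1 = c.
    apply/eqP; apply/negPn/negP => y1c.
    by move: (Hnc w y1 wK (sK _ _ wK s1) wc y1c); rewrite s1.
  have y2c : y2 = c.
    apply/eqP; apply/negPn/negP => y2c.
    by move: (Hnc w y2 wK (sK _ _ wK s2) wc y2c); rewrite s2.
  by rewrite y1c y2c.
by move: wC; rewrite inE => /eqP ->.
Qed.

Lemma centers_indep c1 c2 : c1 \in C -> c2 \in C -> ~~ adj c1 c2.
Proof.
move=> c1C c2C; apply/negP => a12.
have [c [cC _ H]] := comp_center c1.
have e1 := H c1 (connect0 _ _) c1C.
have e2 := H c2 (connect1 (center_s c1C a12)) c2C.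
by move: a12; rewrite e1 e2 adj_irr.
Qed.

Lemma nc_center_uniq v c1 c2 : v \notin C -> c1 \in C -> c2 \in C ->
  adj v c1 -> adj v c2 -> c1 = c2.
Proof.
move=> vC c1C c2C a1 a2.
have [c [cC _ H]] := comp_center v.
have s1 : s v c1 by rewrite s_sym; apply: center_s => //; rewrite adj_sym.
have s2 : s v c2 by rewrite s_sym; apply: center_s => //; rewrite adj_sym.
by rewrite (H c1 (connect1 s1) c1C) (H c2 (connect1 s2) c2C).
Qed.

Lemma nc_has_center v : v \notin C -> exists2 c, c \in C & adj v c.
Proof.
move=> vC.
case: Hs => _ _ /(_ v) [K4 [c cK [Hc Hnc]]].
have [c' [c'C vc' H]] := comp_center v.
have cc' : c = c'.
  apply: H; first by move: cK; rewrite inE.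
  rewrite inE; apply/eqP.
  set K := [set w | connect s v w] in K4 cK Hc Hnc.
  have -> : [set w | s c w] = K :\ c.
    apply/setP => w; rewrite !inE.
    apply/idP/idP => [cw|/andP [wc wK]].
      rewrite andbC; apply/andP; split.
        by move: cK; rewrite inE => vc; apply: connect_trans vc (connect1 cw).
      by apply: contraTneq cw => ->; apply/negP => /s_adj; rewrite adj_irr.
    by apply: Hc; rewrite ?inE.
  by move: K4; rewrite (cardsD1 c) cK => -[].
subst c'.
have vc : v != c by apply: contraNneq vC => ->.
exists c => //; rewrite adj_sym; apply: s_adj; apply: Hc => //.
by rewrite inE connect0.
Qed.


Definition Lnb v := [set w | adj v w & w \notin C].
Lemma inLnb v w : (w \in Lnb v) = adj v w && (w \notin C).
Proof. by rewrite inE. Qed.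
Definition other v a := odflt a [pick w in Lnb v :\ a].

Lemma Lnb2 v : v \notin C -> #|Lnb v| = 2.
Proof.
move=> vC; have [c cC vc] := nc_has_center vC.
have E : nbhd adj v = c |: Lnb v.
  apply/setP => w; rewrite in_nbhd in_setU1 inLnb.
  case: (boolP (w \in C)) => wC.
    rewrite /= andbF orbF; apply/idP/idP => [vw|/eqP ->//].
    by rewrite (nc_center_uniq vC wC cC vw vc).
  by rewrite andbT; apply/idP/idP => [->|/orP [/eqP ->|]]; rewrite ?orbT.
move: (nb3 v); rewrite E cardsU1 inLnb cC andbF /=.
by move=> [].
Qed.

Lemma otherP v a : v \notin C -> a \in Lnb v ->
  [/\ other v a \in Lnb v, other v a != a &
      forall w, w \in Lnb v -> w = a \/ w = other v a].
Proof.
move=> vC aL.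
have : #|Lnb v :\ a| == 1.
  by move: (Lnb2 vC); rewrite (cardsD1 a) aL add1n => -[->].
move=> /cards1P [w0 E].
have -> : other v a = w0 by rewrite /other E; case: pickP => [y|/(_ w0)];
  rewrite ?inE ?eqxx // => /eqP.
have : w0 \in Lnb v :\ a by rewrite E inE.
rewrite in_setD1 => /andP [w0a w0L]; split => // w wL.
case: (eqVneq w a) => [->|wa]; [by left | right].
have : w \in Lnb v :\ a by rewrite in_setD1 wa wL.
by rewrite E inE => /eqP.
Qed.

Definition Ldart (d : V * V) := [&& adj d.1 d.2, d.1 \notin C & d.2 \notin C].
Definition g (d : V * V) := if Ldart d then (d.2, other d.2 d.1) else d.
Definition swap (d : V * V) := (d.2, d.1).

Lemma Ldart_Lnb a b : Ldart (a, b) -> [/\ a \notin C, b \notin C, a \in Lnb b & b \in Lnb a].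
Proof. by case/and3P => /= ab aC bC; rewrite !inLnb aC bC ab (adj_sym b a) ab. Qed.

Lemma g_Ldart d : Ldart d -> Ldart (g d).
Proof.
case: d => a b H; rewrite /g H /=.
have [aC bC aL bL] := Ldart_Lnb H.
have [oL _ _] := otherP bC aL.
by move: oL; rewrite inE /Ldart /= => /andP [-> ->]; rewrite bC.
Qed.

Lemma iter_Ldart n d : Ldart d -> Ldart (iter n g d).
Proof. by move=> H; elim: n => //= n IH; apply: g_Ldart. Qed.

Lemma g_inj : injective g.
Proof.
move=> [a b] [a' b']; rewrite /g /=.
case: (boolP (Ldart (a, b))) => H; case: (boolP (Ldart (a', b'))) => H' //.
- move=> [eb eo]; subst b'.
  have [aC bC aL bL] := Ldart_Lnb H.
  have [aC' _ aL' _] := Ldart_Lnb H'.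
  have [oL oa Ho] := otherP bC aL.
  have [oL' oa' Ho'] := otherP bC aL'.
  case: (Ho a' aL') => [->//|ea].
  by move: oa'; rewrite -eo -ea eqxx.
- by move=> E; move: (g_Ldart H); rewrite /g H E (negbTE H').
- by move=> E; move: (g_Ldart H'); rewrite /g H' -E (negbTE H).
Qed.

Lemma g_rev d : Ldart d -> g (swap (g d)) = swap d.
Proof.
case: d => a b H.
have [aC bC aL bL] := Ldart_Lnb H.
have [oL oa Ho] := otherP bC aL.
have H2 : Ldart (other b a, b).
  by move: oL; rewrite inE /Ldart /= => /andP [ob ->]; rewrite adj_sym ob bC.
rewrite /g H /swap /= H2 /=.
have [_ _ oL2 _] := Ldart_Lnb H2.
have [_ ob Ho2] := otherP bC oL2.
case: (Ho2 a aL) => [E|<- //].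
by move: oa; rewrite -E eqxx.
Qed.

Lemma g_neq_swap d : Ldart d -> g d != swap d.
Proof.
case: d => a b H; have [aC bC aL bL] := Ldart_Lnb H.
have [_ oa _] := otherP bC aL.
by rewrite /g H /swap /=; apply: contra oa => /eqP [->].
Qed.

Lemma swap_neq d : Ldart d -> swap d != d.
Proof.
case: d => a b /and3P [/= ab _ _]; rewrite /swap /=.
by apply/negP => /eqP [ba _]; move: ab; rewrite ba adj_irr.
Qed.

Lemma rev_iter z k : Ldart z -> swap z = iter k g z ->
  forall i, i <= k -> swap (iter i g z) = iter (k - i) g z.
Proof.
move=> Lz E; elim => [|i IH] ik; first by rewrite subn0.
have IH' := IH (ltnW ik).
have kS : k - i = (k - i.+1).+1 by rewrite subnS prednK // subn_gt0.
apply: g_inj; rewrite -iterS -kS -IH' iterS g_rev //.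
exact: iter_Ldart.
Qed.

Lemma orbit_fst_inj e : Ldart e -> {in orbit g e &, injective fst}.
Proof.
move=> Le y y'; rewrite -!fconnect_orbit => ey ey' E.
have Ly : Ldart y by rewrite -(iter_findex ey); apply: iter_Ldart.
have Ly' : Ldart y' by rewrite -(iter_findex ey'); apply: iter_Ldart.
apply/eqP; apply/negPn/negP => yy'.
case: y ey Ly yy' E => a b ey Ly; case: y' ey' Ly' => a' b' ey' Ly' yy' /= E.
subst a'.
have [aC bC aL bL] := Ldart_Lnb Ly.
have [_ b'C _ bL'] := Ldart_Lnb Ly'.
have bb' : b' != b by apply: contra yy' => /eqP ->.
have [oL oa Ho] := otherP aC bL.
have Eg : g (swap (a, b)) = (a, b').
  rewrite /g /swap /=.
  have -> : Ldart (b, a) by rewrite /Ldart /= adj_sym; case/and3P: Ly => /= -> -> ->.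
  by case: (Ho b' bL') => [E|<-//]; move: bb'; rewrite E eqxx.
have yy : fconnect g (a, b) (a, b').
  by rewrite -(same_connect (fconnect_sym g_inj) ey).
have yy2 : fconnect g (a, b) (swap (a, b)) by rewrite (same_fconnect1_r g_inj) Eg.
have Ek := iter_findex yy2.
move: Ek; set k := findex _ _ _ => Ek; symmetry in Ek.
have R := rev_iter Ly Ek.
have hk : k./2 <= k by rewrite -{2}(odd_double_half k) -addnn addnCA leq_addr.
have [od|ev] := boolP (odd k).
- have := R k./2 hk.
  have -> : k - k./2 = (k./2).+1.
    by rewrite -{1}(odd_double_half k) od -addnn add1n -addnS addKn.
  by rewrite iterS => E2; move: (g_neq_swap (iter_Ldart k./2 Ly)); rewrite E2 eqxx.
- have := R k./2 hk.
  have -> : k - k./2 = k./2.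
    by rewrite -{1}(odd_double_half k) (negbTE ev) -addnn add0n addKn.
  by move=> E2; move: (swap_neq (iter_Ldart k./2 Ly)); rewrite E2 eqxx.
Qed.

End Star.

Section Face.
Variables (V : finType) (adj : rel V) (rho : V -> V -> V).
Hypothesis adj_sym : symmetric adj.
Hypothesis nb3 : forall v, #|nbhd adj v| = 3.
Hypothesis rot : rotation_system adj rho.

Lemma in_nbhd' v w : (w \in nbhd adj v) = adj v w.
Proof. by rewrite inE. Qed.

Lemma rho_nb v u : adj v u -> adj v (rho v u).
Proof. by case: (rot v) => H _; apply: H. Qed.

Lemma iter_rho_nb v u n : adj v u -> adj v (iter n (rho v) u).
Proof. by move=> H; elim: n => //= n IH; apply: rho_nb. Qed.

Lemma rho_inj v : {in nbhd adj v &, injective (rho v)}.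
Proof.
apply/imset_injP; apply/eqP/eq_card => w.
apply/idP/idP => [/imsetP [u uN ->]|wN].
  by move: uN; rewrite !in_nbhd'; apply: rho_nb.
have : #|nbhd adj v :\ w| = 2 by move: (nb3 v); rewrite (cardsD1 w) wN add1n => -[].
move=> /eqP; case: (set_0Vmem (nbhd adj v :\ w)) => [->|[u]]; first by rewrite cards0.
rewrite in_setD1 => /andP [uw uN] _.
have Fuw : fconnect (rho v) u w.
  by case: (rot v) => _ H; apply: H; rewrite -in_nbhd'.
have E := iter_findex Fuw.
move: E; case Ek: (findex _ u w) => [|k] /= E.
  by move: uw; rewrite E eqxx.
apply/imsetP; exists (iter k (rho v) u) => //.
by rewrite in_nbhd'; apply: iter_rho_nb; rewrite -in_nbhd'.
Qed.

Definition sig' (d : V * V) := if d \in darts adj then face_succ rho d else d.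

Lemma in_darts d : (d \in darts adj) = adj d.1 d.2.
Proof. by rewrite inE. Qed.

Lemma dart_succ d : d \in darts adj -> face_succ rho d \in darts adj.
Proof.
by case: d => a b; rewrite !in_darts /face_succ /= => ab; apply: rho_nb; rewrite adj_sym.
Qed.

Lemma sig'_inj : injective sig'.
Proof.
move=> d d'; rewrite /sig'.
case: (boolP (d \in darts adj)) => H; case: (boolP (d' \in darts adj)) => H' //.
- case: d H => a b H; case: d' H' => a' b' H'; rewrite /face_succ /= => -[eb er].
  subst b'; congr (_, _); apply: (@rho_inj b) => //; rewrite in_nbhd' adj_sym.
    by rewrite in_darts in H.
  by rewrite in_darts in H'.
- by move=> E; move: (dart_succ H); rewrite E (negbTE H').
- by move=> E; move: (dart_succ H'); rewrite -E (negbTE H).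
Qed.

Lemma iter_sig n d : d \in darts adj ->
  iter n sig' d = iter n (face_succ rho) d /\ iter n sig' d \in darts adj.
Proof.
move=> dD; elim: n => [|n [IH1 IH2]] //=.
by rewrite /sig' IH2 IH1; split => //; rewrite -IH1; apply: dart_succ.
Qed.

Lemma face_of_sig' e : e \in darts adj -> face_of rho e =i fconnect sig' e.
Proof.
move=> eD y; rewrite inE; apply/idP/idP => H.
  have <- := iter_findex H; have [<- _] := iter_sig (findex (face_succ rho) e y) eD.
  exact: fconnect_iter.
have <- := iter_findex H; have [-> _] := iter_sig (findex sig' e y) eD.
exact: fconnect_iter.
Qed.

Lemma face_sub_darts e : e \in darts adj -> {subset face_of rho e <= darts adj}.
Proof.
move=> eD y; rewrite face_of_sig' // => H.
have <- := iter_findex H; have [_ ->] := iter_sig (findex sig' e y) eD; done.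
Qed.

Lemma face5 P x : P \in faces adj rho -> #|P| = 5 -> {in P &, injective fst} ->
  x \in face_vertices P ->
  exists a1 a2 a3 a4,
   [/\ uniq [:: x; a1; a2; a3; a4],
       P =i [:: (x, a1); (a1, a2); (a2, a3); (a3, a4); (a4, x)],
       {subset P <= darts adj},
       rho a1 x = a2 /\ rho a2 a1 = a3 &
       rho a3 a2 = a4 /\ rho a4 a3 = x /\ rho x a4 = a1].
Proof.
move=> /imsetP [e eD ->] P5 Pinj /imsetP [d dP ->].
have PD := face_sub_darts eD.
have dD := PD d dP.
have Pd : face_of rho e =i fconnect sig' d.
  have Hed : fconnect sig' e d by rewrite -[_ d]/(d \in fconnect sig' e) -face_of_sig'.
  move=> y; rewrite face_of_sig' //.
  exact: (same_connect (fconnect_sym sig'_inj) Hed).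
have ord5 : order sig' d = 5.
  by rewrite /order -P5; apply: eq_card => y; rewrite Pd.
have Horb := orbit_uniq sig' d.
have Hit := iter_order sig'_inj d.
have Hmem : forall y, (y \in face_of rho e) = (y \in orbit sig' d).
  by move=> y; rewrite Pd -fconnect_orbit.
move: Horb Hit Hmem; rewrite /orbit ord5 /=.
have sE : forall y, y \in darts adj -> sig' y = (y.2, rho y.2 y.1).
  by move=> y yD; rewrite /sig' yD.
destruct d as [a0 a1].
set a2 := rho a1 a0.
have D1 : (a1, a2) \in darts adj := dart_succ dD.
set a3 := rho a2 a1.
have D2 : (a2, a3) \in darts adj := dart_succ D1.
set a4 := rho a3 a2.
have D3 : (a3, a4) \in darts adj := dart_succ D2.
set a5 := rho a4 a3.
have D4 : (a4, a5) \in darts adj := dart_succ D3.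
rewrite (sE _ dD) /= (sE _ D1) /= (sE _ D2) /= (sE _ D3) /= (sE _ D4) /=.
move=> Hu [e5 e6] Hmem.
exists a1, a2, a3, a4; split.
- change (uniq (map fst [:: (a0, a1); (a1, a2); (a2, a3); (a3, a4); (a4, a5)])).
  rewrite map_inj_in_uniq // => y z yi zi; apply: Pinj; rewrite Hmem //.
- by move=> y; have e5' : rho a4 a3 = a0 := e5; rewrite Hmem e5'.
- exact: PD.
- by [].
- by split; [|split]; [ | exact: e5 | rewrite -e5; exact: e6].
Qed.

End Face.

Lemma set2_eq (T : finType) (a b c d : T) : a != b -> [set a; b] = [set c; d] ->
  (c = a /\ d = b) \/ (c = b /\ d = a).
Proof.
move=> ab E.
have : c \in [set a; b] by rewrite E !inE eqxx.
have : d \in [set a; b] by rewrite E !inE eqxx orbT.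
have : a \in [set c; d] by rewrite -E !inE eqxx.
have : b \in [set c; d] by rewrite -E !inE eqxx orbT.
rewrite !inE.
by do 4 (case/orP => /eqP ?); subst; auto; move: ab; rewrite eqxx.
Qed.

Theorem mainTheorem5 (V : finType) (adj : rel V) (rho : V -> V -> V)
  (s : rel V) (P : {set V * V}) (x : V) :
  fullerene adj rho ->
  perfect_star_packing adj s ->
  P \in faces adj rho -> #|P| = 5 ->
  x \in face_vertices P -> x \in centers s ->
  exists p : seq V,
    [/\ is_cycle adj p,
        (* C lies in G - C(S) *)
        (forall v, v \in p -> v \notin centers s),
        ~ facial_cycle adj rho p,
        (* the path P - x is a subgraph of C *)
        (forall v, v \in face_vertices P -> v != x -> v \in p) &
        (forall d, d \in P -> d.1 != x -> d.2 != x ->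
                   [set d.1; d.2] \in cycle_edges p)].
Proof.
move=> [[[asym airr] _ Hcub Hrot _] Hfaces] Hs HP P5 Hx xC.
have Finj : forall F, F \in faces adj rho -> {in F &, injective fst}.
  move=> F HF; have [_ E] := Hfaces F HF.
  by apply/imset_injP; rewrite -/(face_vertices F) E.
have [a1 [a2 [a3 [a4 [Hu HPl PD [r1 r2] [r3 [r4 r5]]]]]]] :=
  face5 asym Hcub Hrot HP P5 (Finj P HP) Hx.
have adjP : forall u v, (u, v) \in P -> adj u v.
  by move=> u v /PD; rewrite inE.
have x1 : adj x a1 by apply: adjP; rewrite HPl !inE eqxx.
have a12 : adj a1 a2 by apply: adjP; rewrite HPl !inE eqxx !orbT.
have a23 : adj a2 a3 by apply: adjP; rewrite HPl !inE eqxx !orbT.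
have a34 : adj a3 a4 by apply: adjP; rewrite HPl !inE eqxx !orbT.
have a4x : adj a4 x by apply: adjP; rewrite HPl !inE eqxx !orbT.
move: Hu; rewrite /= !inE !negb_or !andbT -!andbA.
move=> /andP [nx1 /andP [nx2 /andP [nx3 /andP [nx4 /andP [n12 /andP [n13 /andP [n14 /andP [n23 /andP [n24 n34]]]]]]]]].
have cind := centers_indep airr Hcub Hs.
have cuniq := nc_center_uniq asym airr Hcub Hs.
have a1C : a1 \notin centers s by apply/negP => H; move: (cind _ _ xC H); rewrite x1.
have a4C : a4 \notin centers s.
  by apply/negP => H; move: (cind _ _ xC H); rewrite asym a4x.
have a2C : a2 \notin centers s.
  apply/negP => H; move: nx2; rewrite (cuniq _ _ _ a1C xC H) ?eqxx //.
  by rewrite asym.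
have a3C : a3 \notin centers s.
  apply/negP => H; move: nx3; rewrite (cuniq _ _ _ a4C xC H) ?eqxx //.
  by rewrite asym.
pose gg := g adj s.
have ginj : injective gg := g_inj asym airr Hcub Hs.
have L12 : Ldart adj s (a1, a2) by rewrite /Ldart /= a12 a1C a2C.
have L23 : Ldart adj s (a2, a3) by rewrite /Ldart /= a23 a2C a3C.
have L34 : Ldart adj s (a3, a4) by rewrite /Ldart /= a34 a3C a4C.
have LnbE : forall u v, Ldart adj s (u, v) -> u \in Lnb adj s v.
  by move=> u v; case/and3P => /= uv uC vC; rewrite inE asym uv uC.
have LnbE' : forall u v, Ldart adj s (u, v) -> v \in Lnb adj s u.
  by move=> u v; case/and3P => /= uv uC vC; rewrite inE uv vC.
have g12 : gg (a1, a2) = (a2, a3).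
  rewrite /gg /g L12 /=; congr (_, _).
  have [_ _ Ho] := otherP asym airr Hcub Hs a2C (LnbE _ _ L12).
  case: (Ho a3 (LnbE' _ _ L23)) => // E; by move: n13; rewrite E eqxx.
have g23 : gg (a2, a3) = (a3, a4).
  rewrite /gg /g L23 /=; congr (_, _).
  have [_ _ Ho] := otherP asym airr Hcub Hs a3C (LnbE _ _ L23).
  case: (Ho a4 (LnbE' _ _ L34)) => // E; by move: n24; rewrite E eqxx.
set w := (gg (a3, a4)).2.
have g34 : gg (a3, a4) = (a4, w) by rewrite /w /gg /g L34.
pose e := (a1, a2).
have Hord := iter_order ginj e.
have ord_gt0 : 0 < order gg e.
  by apply/card_gt0P; exists e; exact: connect0.
have [m Em] : exists m, order gg e = m.+4.
  move: Hord ord_gt0; case: (order gg e) => [|[|[|[|m]]]] //= ; try by exists m.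
  - by rewrite /e g12 => -[E]; move: n12; rewrite E eqxx.
  - by rewrite /e g12 g23 => -[E]; move: n13; rewrite E eqxx.
  - by rewrite /e g12 g23 g34 => -[E]; move: n14; rewrite E eqxx.
pose p := map fst (orbit gg e).
have Hp : exists r, p = [:: a1, a2, a3, a4 & r].
  by rewrite /p /orbit Em /= g12 g23 g34 /=; eexists.
have HO : forall y, y \in orbit gg e -> Ldart adj s y.
  move=> y; rewrite -fconnect_orbit => H; rewrite -(iter_findex H).
  exact: (iter_Ldart asym airr Hcub Hs).
have pC : forall v, v \in p -> v \notin centers s.
  by move=> v /mapP [y /HO /and3P [_ ? _] ->].
have [r Er] := Hp.
have Hedges : forall d, d \in P -> d.1 != x -> d.2 != x ->
                   [set d.1; d.2] \in cycle_edges p.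
  move=> d; rewrite HPl !inE => /orP [/eqP ->|/orP [/eqP ->|/orP [/eqP ->|/orP [/eqP ->|/eqP ->]]]] /=; rewrite ?eqxx // => _ _;
    rewrite /cycle_edges Er; apply/imsetP.
  - exists a1; first by rewrite !inE eqxx.
    by rewrite /= eqxx.
  - exists a2; first by rewrite !inE eqxx orbT.
    by rewrite /= [a2 == a1]eq_sym (negbTE n12) eqxx.
  - exists a3; first by rewrite !inE eqxx !orbT.
    by rewrite /= [a3 == a1]eq_sym (negbTE n13) [a3 == a2]eq_sym (negbTE n23) eqxx.
exists p; split => //.
- split.
  + rewrite /p map_inj_in_uniq ?orbit_uniq //.
    exact: (orbit_fst_inj asym airr Hcub Hs L12).
  + by rewrite Er.
  + rewrite /p cycle_map.
    apply: (@sub_in_cycle _ [pred d | Ldart adj s d] (frel gg)).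
    * move=> y z; rewrite !inE => Ly _ /eqP <-.
      by rewrite /relpre /gg /g Ly /=; case/and3P: Ly.
    * by apply/allP => y /HO.
    * exact: (cycle_orbit ginj).
- move=> [F HF EF].
  have FI := Finj F HF.
  case/imsetP: HF => f0 _ EF0.
  have Fsucc : forall y, y \in F -> face_succ rho y \in F.
    by rewrite EF0 => y; rewrite !inE => H; apply: connect_trans H (fconnect1 _ _).
  have xp : forall u, [set u; x] \in cycle_edges p -> False.
    move=> u /imsetP [y yp E].
    have : x \in [set y; next p y] by rewrite -E !inE eqxx orbT.
    rewrite !inE => /orP [/eqP Ex|/eqP Ex].
      by move: (pC y yp); rewrite -Ex xC.
    have yp' : next p y \in p by rewrite mem_next.
    by move: (pC _ yp'); rewrite -Ex xC.
  have a4xF : (a4, x) \notin F.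
    apply/negP => H; apply: (xp a4); rewrite EF; apply/imsetP; by exists (a4, x).
  have s12 : face_succ rho (a1, a2) = (a2, a3) by rewrite /face_succ /= r2.
  have s23 : face_succ rho (a2, a3) = (a3, a4) by rewrite /face_succ /= r3.
  have s34 : face_succ rho (a3, a4) = (a4, x) by rewrite /face_succ /= r4.
  have F21 : (a2, a1) \in F.
    have : [set a1; a2] \in face_edges F.
      by rewrite -EF; apply: (Hedges (a1, a2)); rewrite ?HPl ?inE ?eqxx ?orbT // eq_sym.
    case/imsetP => [[d1 d2] dF Ed].
    case: (set2_eq n12 Ed) => /= [[E1 E2]|[E1 E2]]; rewrite -E1 -E2 //; rewrite E1 E2 in dF.
    by move: a4xF; rewrite -s34 -s23 -s12 !Fsucc.
  have F32 : (a3, a2) \in F.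
    have : [set a2; a3] \in face_edges F.
      by rewrite -EF; apply: (Hedges (a2, a3)); rewrite ?HPl ?inE ?eqxx ?orbT // eq_sym.
    case/imsetP => [[d1 d2] dF Ed].
    case: (set2_eq n23 Ed) => /= [[E1 E2]|[E1 E2]]; rewrite -E1 -E2 //; rewrite E1 E2 in dF.
    by move: a4xF; rewrite -s34 -s23 !Fsucc.
  have Er3 : rho a2 a3 = a1.
    have := FI _ _ F21 (Fsucc _ F32) erefl.
    by rewrite /face_succ /= => -[].
  have sub : nbhd adj a2 \subset [set a1; a3].
    apply/subsetP => w0 wN.
    have a21 : adj a2 a1 by rewrite asym.
    have wN' : adj a2 w0 by move: wN; rewrite inE.
    have := (proj2 (Hrot a2)) a1 w0 a21 wN'.
    move=> /iter_findex <-.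
    elim: (findex _ _ _) => [|k IH] /=; first by rewrite !inE eqxx.
    by move: IH; rewrite !inE => /orP [/eqP ->|/eqP ->]; rewrite ?r2 ?Er3 eqxx ?orbT.
  by move: (subset_leq_card sub); rewrite (Hcub a2) cards2 n13.
- move=> v /imsetP [d dP ->].
  move: dP; rewrite HPl !inE => /orP [/eqP ->|/orP [/eqP ->|/orP [/eqP ->|/orP [/eqP ->|/eqP ->]]]] /=; rewrite ?eqxx // => _;
    by rewrite Er !inE eqxx ?orbT.
Qed.
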